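(* Let $\ell\geq 2$ and $n=4\ell+2$. Then $\mathrm{capt}(H(n),2)=\ell+2(n-4)$.
   Context: The graph $H(7)$ has vertex set $\{1,\dots,7\}$: vertices $6,2,1,4$ form a path $6-2-1-4$; vertices $3$ and $5$ are each adjacent to all of $6,2,1,4$ and not adjacent to each other; vertex $7$ is adjacent exactly to $6$, $4$ and $3$. For $n\geq 8$, $H(n)$ is obtained from $H(n-1)$ by adding vertex $n$ adjacent exactly to $n-1$, $n-3$ and $n-4$. All graphs are reflexive (every vertex is considered adjacent to itself). The game of $k$ cops and $m$ robbers on $G$: in round 0 the cops first choose starting vertices, then the robbers choose theirs. In each round $i\geq 1$, all cops move (each to an adjacent vertex or staying), then all robbers move likewise. Several players may occupy the same vertex. Whenever a cop and some robbers occupy the same vertex, those robbers are captured and take no further part in the game. Both sides have full information. The cops win if all robbers are captured after finitely many rounds. For a cop-win graph $G$, $\mathrm{capt}(G,m)$ is the index of the round in which the last robber is captured when one cop plays to minimize this index and $m$ robbers play to maximize it. ($H(n)$ is cop-win.) *)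

(* Defs.v *)
From mathcomp Require Import all_boot.
Set Implicit Arguments. Unset Strict Implicit. Unset Printing Implicit Defensive.

(* Vertices 1..n of the paper are represented by the ordinals 0..n-1 of 'I_n
   (paper vertex v <-> ordinal v-1).  [hedge a b] (a < b, 1-indexed) lists the
   edges {a,b} of H(n) whose larger endpoint is b. *)
Definition H7_edges : seq (nat * nat) :=
  [:: (2,6); (1,2); (1,4);
      (3,6); (2,3); (1,3); (3,4);
      (5,6); (2,5); (1,5); (4,5);
      (6,7); (4,7); (3,7)].

Definition hedge (a b : nat) : bool :=
  if b <= 7 then (a, b) \in H7_edges
  else [|| a == b - 1, a == b - 3 | a == b - 4].

(* Reflexive adjacency of H(n) (meaningful for n >= 7). *)
Definition Hgraph (n : nat) : rel 'I_n :=
  fun x y => [|| x == y, hedge x.+1 y.+1 | hedge y.+1 x.+1].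

Section Game.
Variables (V : finType) (adj : rel V) (m : nat).

(* robber positions: None = captured *)
Definition rstate := {ffun 'I_m -> option V}.

Definition capture (c : V) (R : rstate) : rstate :=
  [ffun i => if R i == Some c then None else R i].

Definition all_captured (R : rstate) : bool := [forall i, R i == None].

Definition robber_move (R R' : rstate) : bool :=
  [forall i, match R i, R' i with
             | None, None => true
             | Some x, Some y => adj x y
             | _, _ => false end].

(* [win_within k c R]: from the position reached at the end of some round i
   (cop at c, robbers R, captures already applied), the cop can force that all
   robbers are captured by the end of round i + k. *)
Fixpoint win_within (k : nat) (c : V) (R : rstate) : bool :=
  all_captured R ||
  match k with
  | 0 => false
  | k'.+1 =>
      [exists c' : V, adj c c' &&
        (let R1 := capture c' R in
         all_captured R1 ||
         [forall R2 : rstate,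
            robber_move R1 R2 ==> win_within k' c' (capture c' R2)])]
  end.

(* The cop can ensure that the last robber is captured in a round of index
   at most T (round 0 = placement round). *)
Definition capt_le (T : nat) : bool :=
  [exists c0 : V, [forall r : {ffun 'I_m -> V},
     win_within T c0 (capture c0 [ffun i => Some (r i)])]].

Definition capt_is (T : nat) : Prop :=
  capt_le T /\ forall T', T' < T -> ~~ capt_le T'.

End Game.

Arguments win_within {V} adj {m} k c R.
Arguments capt_le {V} adj m T.
Arguments capt_is {V} adj m T.
Arguments Hgraph n : clear implicits.

(* Main.v *)
Require Import Defs.
From mathcomp Require Import all_boot zify.
Set Implicit Arguments. Unset Strict Implicit. Unset Printing Implicit Defensive.

Definition adjn (x y : nat) : bool :=
  [|| x == y, x == y.+1, y == x.+1, x == y + 3, y == x + 3, x == y + 4, y == x + 4,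
      (x == 0) && (y == 2) | (x == 2) && (y == 0)].
Definition Bz (n x : nat) := n - 4 + (x + 2) %/ 4.
Definition F1 (n x y : nat) : nat :=
  if x == y then 0 else if adjn x y then 1 else if y < x then Bz n x else
  if (y - x) %% 4 == 1 then n - 4 - x else
  if (y - x) %% 4 == 2 then (if x == 0 then n - 5 else Bz n x) else
  if (y - x) %% 4 == 3 then n - 6 - x else n - 7 - x.

Lemma adjn_sym x y : adjn x y = adjn y x.
Proof. rewrite /adjn; apply/idP/idP; lia. Qed.

Lemma adjn_cases x y : adjn x y ->
  y = x \/ y = x.+1 \/ x = y.+1 \/ y = x + 3 \/ x = y + 3 \/ y = x + 4 \/ x = y + 4 \/ (x = 0 /\ y = 2) \/ (x = 2 /\ y = 0).
Proof. rewrite /adjn; lia. Qed.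

Lemma F1_eq0 n x : F1 n x x = 0.
Proof. by rewrite /F1 eqxx. Qed.
Lemma F1_adj n x y : adjn x y -> x != y -> F1 n x y = 1.
Proof. by rewrite /F1 => -> /negbTE ->. Qed.

Lemma nadj_neq x y : ~~ adjn x y -> (x == y) = false.
Proof. rewrite /adjn; lia. Qed.

Lemma F1_Bb n x y : y + 5 <= x \/ (x = y + 2 /\ 0 < y) -> F1 n x y = Bz n x.
Proof.
move=> H; have A: ~~ adjn x y by rewrite /adjn; lia.
rewrite /F1 nadj_neq // (negbTE A). have ->: y < x by lia. done.
Qed.

Lemma F1_Ba n x y : 0 < x -> x + 2 <= y -> (y - x) %% 4 = 2 -> F1 n x y = Bz n x.
Proof.
move=> H1 H2 H3; have A: ~~ adjn x y by rewrite /adjn; lia.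
rewrite /F1 nadj_neq // (negbTE A) ltnNge (_ : x <= y) //=; last lia.
rewrite H3 /=. by case: eqP => //; lia.
Qed.

Lemma F1_U1 n x y : x + 5 <= y -> (y - x) %% 4 = 1 -> F1 n x y = n - 4 - x.
Proof.
move=> H2 H3; have A: ~~ adjn x y by rewrite /adjn; lia.
by rewrite /F1 nadj_neq // (negbTE A) ltnNge (_ : x <= y) //= ?H3 //; lia.
Qed.
Lemma F1_U3 n x y : x + 7 <= y -> (y - x) %% 4 = 3 -> F1 n x y = n - 6 - x.
Proof.
move=> H2 H3; have A: ~~ adjn x y by rewrite /adjn; lia.
by rewrite /F1 nadj_neq // (negbTE A) ltnNge (_ : x <= y) //= ?H3 //; lia.
Qed.
Lemma F1_U0 n x y : x + 8 <= y -> (y - x) %% 4 = 0 -> F1 n x y = n - 7 - x.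
Proof.
move=> H2 H3; have A: ~~ adjn x y by rewrite /adjn; lia.
by rewrite /F1 nadj_neq // (negbTE A) ltnNge (_ : x <= y) //= ?H3 //; lia.
Qed.
Lemma F1_Z2 n y : 6 <= y -> y %% 4 = 2 -> F1 n 0 y = n - 5.
Proof.
move=> H2 H3; have A: ~~ adjn 0 y by rewrite /adjn; lia.
by rewrite /F1 nadj_neq // (negbTE A) /= subn0 H3.
Qed.

Lemma nadj_class x y : ~~ adjn x y ->
  (y + 5 <= x \/ (x = y + 2 /\ 0 < y)) \/
  (0 < x /\ x + 2 <= y /\ (y - x) %% 4 = 2) \/
  (x + 5 <= y /\ (y - x) %% 4 = 1) \/
  (x + 7 <= y /\ (y - x) %% 4 = 3) \/
  (x + 8 <= y /\ (y - x) %% 4 = 0) \/ (x = 0 /\ 6 <= y /\ y %% 4 = 2).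
Proof. rewrite /adjn => H. lia. Qed.

Lemma F1_le_Bz n x y : 5 <= n -> F1 n x y <= Bz n x.
Proof. move=> Hn; rewrite /F1 /Bz; repeat case: ifP => _; lia. Qed.

Lemma Bz_ge n x : n - 4 <= Bz n x.
Proof. rewrite /Bz; lia. Qed.

Lemma F1_adj_le n x y : adjn x y -> F1 n x y <= 1.
Proof. rewrite /F1 => ->; by case: ifP. Qed.

Lemma F1_ge2 n x y : 10 <= n -> x < n -> y < n -> ~~ adjn x y -> 2 <= F1 n x y.
Proof.
move=> Hn Hx Hy A.
case: (nadj_class A) => [H|[[H1 [H2 H3]]|[[H1 H2]|[[H1 H2]|[[H1 H2]|[H1 [H2 H3]]]]]]].
- rewrite F1_Bb //; rewrite /Bz; lia.
- rewrite F1_Ba //; rewrite /Bz; lia.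
- rewrite F1_U1 //; lia.
- rewrite F1_U3 //; lia.
- rewrite F1_U0 //; lia.
- rewrite H1 F1_Z2 //; lia.
Qed.

Lemma F1_UA n c y : c < y -> (y - c) %% 4 != 2 -> F1 n c y <= maxn 1 (n - 4 - c).
Proof.
move=> H1 H2. case A: (adjn c y). by apply: leq_trans (F1_adj_le _ A) _; lia.
case: (nadj_class (negbT A)) => [H|[[H3 [H4 H5]]|[[H3 H4]|[[H3 H4]|[[H3 H4]|[H3 [H4 H5]]]]]]].
- lia.
- lia.
- rewrite F1_U1 //; lia.
- rewrite F1_U3 //; lia.
- rewrite F1_U0 //; lia.
- lia.
Qed.

Lemma F1_0_le n y : 10 <= n -> y %% 4 != 1 -> F1 n 0 y <= n - 5.
Proof.
move=> Hn H. case: (eqVneq 0 y) => [<-|ne]; first by rewrite F1_eq0.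
case A: (adjn 0 y). by apply: leq_trans (F1_adj_le _ A) _; lia.
case: (nadj_class (negbT A)) => [H1|[[H3 [H4 H5]]|[[H3 H4]|[[H3 H4]|[[H3 H4]|[H3 [H4 H5]]]]]]].
- lia.
- lia.
- lia.
- rewrite F1_U3 //; lia.
- rewrite F1_U0 //; lia.
- rewrite F1_Z2 //; lia.
Qed.

Definition g (n x y : nat) : nat :=
  if adjn x y then y else if x == 0 then 1 + (y - 1) %% 4 else
  if (y < x) || ((y - x) %% 4 == 2) then x - 4 else
  if (y - x) %% 4 == 1 then x + 1 else if (y - x) %% 4 == 3 then x + 3 else x + 4.

Lemma CB n x y : 10 <= n -> x < n -> y < n -> ~~ adjn x y ->
  [/\ g n x y < n, adjn x (g n x y) &
   forall y', y' < n -> adjn y y' -> y' = g n x y \/ F1 n (g n x y) y' < F1 n x y].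
Proof.
move=> Hn Hx Hy A.
have gE : g n x y = if x == 0 then 1 + (y - 1) %% 4 else
  if (y < x) || ((y - x) %% 4 == 2) then x - 4 else
  if (y - x) %% 4 == 1 then x + 1 else if (y - x) %% 4 == 3 then x + 3 else x + 4.
  by rewrite /g (negbTE A).
case: (nadj_class A) => [H|[[H1 [H2 H3]]|[[H1 H2]|[[H1 H2]|[[H1 H2]|[H1 [H2 H3]]]]]]].
-
  have -> : g n x y = x - 4.
    rewrite gE. have ->: (x == 0) = false by lia. by have ->: y < x by lia.
  rewrite F1_Bb //. split; first lia. rewrite /adjn; lia.
  move=> y' Hy' Ayy'. right.
  case: (leqP 5 x) => Hx5.
  + apply: leq_ltn_trans (F1_le_Bz _ _ _) _; rewrite /Bz; lia.
  + have->: x - 4 = 0 by lia. apply: leq_ltn_trans (F1_le_Bz _ _ _) _; rewrite /Bz; lia.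
- have -> : g n x y = x - 4.
    rewrite gE. have ->: (x == 0) = false by lia. by rewrite H3 orbT.
  rewrite F1_Ba //. split; first lia. rewrite /adjn; lia.
  move=> y' Hy' Ayy'. right.
  case: (leqP 5 x) => Hx5.
  + apply: leq_ltn_trans (F1_le_Bz _ _ _) _; rewrite /Bz; lia.
  case: (leqP 2 x) => Hx2.
  + have->: x - 4 = 0 by lia. apply: leq_ltn_trans (F1_le_Bz _ _ _) _; rewrite /Bz; lia.
  have->: x - 4 = 0 by lia. have := adjn_cases Ayy' => C.
  have H0 : F1 n 0 y' <= n - 5 by apply: F1_0_le => //; lia.
  rewrite /Bz; lia.
- have -> : g n x y = x + 1.
    rewrite gE; case: eqP => [X0|X0]; first lia.
    have ->: y < x = false by lia. rewrite H2 /=. done.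
  rewrite F1_U1 //. split; [lia | rewrite /adjn; lia |].
  move=> y' Hy' Ayy'. have := adjn_cases Ayy' => C.
  case: (eqVneq y' (x + 1)) => E; [by left|right].
  apply: leq_ltn_trans (F1_UA _ _ _) _; lia.
- have -> : g n x y = x + 3.
    rewrite gE; case: eqP => [X0|X0]; first lia.
    have ->: y < x = false by lia. rewrite H2 /=. done.
  rewrite F1_U3 //. split; [lia | rewrite /adjn; lia |].
  move=> y' Hy' Ayy'. have := adjn_cases Ayy' => C.
  case: (eqVneq y' (x + 3)) => E; [by left|right].
  apply: leq_ltn_trans (F1_UA _ _ _) _; lia.
- have -> : g n x y = x + 4.
    rewrite gE; case: eqP => [X0|X0]; first lia.
    have ->: y < x = false by lia. rewrite H2 /=. done.
  rewrite F1_U0 //. split; [lia | rewrite /adjn; lia |].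
  move=> y' Hy' Ayy'. have := adjn_cases Ayy' => C.
  case: (eqVneq y' (x + 4)) => E; [by left|right].
  apply: leq_ltn_trans (F1_UA _ _ _) _; lia.
- subst x. have -> : g n 0 y = 2 by rewrite gE /=; lia.
  rewrite F1_Z2 //. split; [lia | done |].
  move=> y' Hy' Ayy'. have := adjn_cases Ayy' => C.
  case: (eqVneq y' 2) => E; [by left|right].
  apply: leq_ltn_trans (F1_UA _ _ _) _; lia.
Qed.

Lemma HIDE n c y : 10 <= n -> 1 <= c -> c < n -> y < n -> y != c ->
  ~~ ((c + 4 <= y) && ((y - c) %% 4 == 0)) ->
  exists y', [/\ y' < n, adjn y y' & F1 n c y' = Bz n c].
Proof.
move=> Hn Hc Hcn Hy Hyc H.
case: (leqP (y + 5) c) => H1.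
  by exists y; rewrite F1_Bb; [split=>//; rewrite /adjn eqxx|left].
case: (eqVneq c (y + 2)) => H2.
  case: (posnP y) => Y0.
    exists 4; rewrite F1_Ba; [split=>//; rewrite /adjn; lia|lia|lia|lia].
  by exists y; rewrite F1_Bb; [split=>//; rewrite /adjn eqxx|right].
case: (eqVneq c (y + 4)) => H3.
  case: (posnP y) => Y0.
    exists 2; rewrite F1_Bb; [split=>//; rewrite /adjn; lia|lia].
  exists (y - 1); rewrite F1_Bb; [split=>//; [lia|rewrite /adjn; lia]|lia].
case: (eqVneq c (y + 3)) => H4.
  exists (y + 1); rewrite F1_Bb; [split=>//; [lia|rewrite /adjn; lia]|lia].
case: (eqVneq c (y + 1)) => H5.
  case: (leqP 3 c) => C3.
    exists (y - 1); rewrite F1_Bb; [split=>//; [lia|rewrite /adjn; lia]|lia].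
  case: (eqVneq c 2) => C2.
    exists 4; rewrite F1_Ba; [split=>//; rewrite /adjn; lia|lia|lia|lia].
  exists 3; rewrite F1_Ba; [split=>//; rewrite /adjn; lia|lia|lia|lia].
have Yc : c < y by lia.
case: (eqVneq y (c + 1)) => H6.
  case: (ltnP (y + 1) n) => T.
    exists (y + 1); rewrite F1_Ba; [split=>//; rewrite /adjn; lia|lia|lia|lia].
  exists (y - 3); rewrite F1_Bb; [split=>//; [lia|rewrite /adjn; lia]|lia].
case: (eqVneq y (c + 3)) => H7.
  exists (y - 1); rewrite F1_Ba; [split=>//; [lia|rewrite /adjn; lia]|lia|lia|lia].
case: (eqVneq y (c + 2)) => H8.
  exists y; rewrite F1_Ba; [split=>//; rewrite /adjn; lia|lia|lia|lia].
have Y5 : c + 5 <= y by lia.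
case: (eqVneq ((y - c) %% 4) 2) => R2.
  exists y; rewrite F1_Ba; [split=>//; rewrite /adjn; lia|lia|lia|lia].
case: (eqVneq ((y - c) %% 4) 1) => R1.
  case: (ltnP (y + 1) n) => T.
    exists (y + 1); rewrite F1_Ba; [split=>//; rewrite /adjn; lia|lia|lia|lia].
  exists (y - 3); rewrite F1_Ba; [split=>//; [lia|rewrite /adjn; lia]|lia|lia|lia].
exists (y - 1); rewrite F1_Ba; [split=>//; [lia|rewrite /adjn; lia]|lia|lia|lia].
Qed.

Lemma F1_0_ge n y : 10 <= n -> 5 <= y -> n - 7 <= F1 n 0 y.
Proof.
move=> Hn Hy. have A : ~~ adjn 0 y by rewrite /adjn; lia.
case: (nadj_class A) => [H1|[[H3 [H4 H5]]|[[H3 H4]|[[H3 H4]|[[H3 H4]|[H3 [H4 H5]]]]]]].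
- lia.
- lia.
- rewrite F1_U1 //; lia.
- rewrite F1_U3 //; lia.
- rewrite F1_U0 //; lia.
- rewrite F1_Z2 //; lia.
Qed.

Lemma RB0 n x y : 10 <= n -> n %% 4 = 2 -> x < n -> y < n -> ~~ adjn x y -> adjn x 0 -> x != 0 ->
  exists y', [/\ y' < n, adjn y y', y' != 0 & F1 n x y <= (F1 n 0 y').+1].
Proof.
move=> Hn Hn4 Hx Hy A Ax0 Xn0.
have X4 : x <= 4 by move: Ax0; rewrite /adjn; lia.
case: (nadj_class A) => [H1|[[H3 [H4 H5]]|[[H3 H4]|[[H3 H4]|[[H3 H4]|[H3 [H4 H5]]]]]]].
- exists 5; rewrite F1_Bb // F1_U1 //; split; [lia|rewrite /adjn; lia|done|rewrite /Bz; lia].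
- rewrite F1_Ba //.
  case: (eqVneq x 1) => X1.
    case: (eqVneq y 3) => Y3.
      exists 6; rewrite F1_Z2 //; split; [lia|rewrite /adjn; lia|done|rewrite /Bz; lia].
    exists (y - 1); rewrite F1_Z2; [split; [lia|rewrite /adjn; lia|lia|rewrite /Bz; lia]|lia|lia].
  case: (eqVneq x 2) => X2.
    exists (y + 1); rewrite F1_U1; [split; [lia|rewrite /adjn; lia|lia|rewrite /Bz; lia]|lia|lia].
  case: (eqVneq x 3) => X3.
    exists y; rewrite F1_U1; [split; [lia|rewrite /adjn; lia|lia|rewrite /Bz; lia]|lia|lia].
  exists (y - 1); rewrite F1_U1; [split; [lia|rewrite /adjn; lia|lia|rewrite /Bz; lia]|lia|lia].
- exists y; rewrite F1_U1 //; split; [done|rewrite /adjn; lia|lia|].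
  case: (eqVneq x 1) => X1.
    rewrite F1_Z2; lia.
  have := @F1_0_ge n y Hn; lia.
- exists y; rewrite F1_U3 //; split; [done|rewrite /adjn; lia|lia|].
  have := @F1_0_ge n y Hn; lia.
- exists y; rewrite F1_U0 //; split; [done|rewrite /adjn; lia|lia|].
  have := @F1_0_ge n y Hn; lia.
- lia.
Qed.

Lemma CHASE n x y c : 10 <= n -> n %% 4 = 2 -> x < n -> y < n -> c < n -> 1 <= c ->
  ~~ adjn x y -> adjn x c -> c + 4 <= y -> (y - c) %% 4 = 0 ->
  exists y', [/\ y' < n, adjn y y', y' != c & F1 n x y <= (F1 n c y').+1].
Proof.
move=> Hn Hn4 Hx Hy Hc Hc1 A Axc H1 H2.
case: (eqVneq c x) => E0.
  subst c. exists y; split; [done|rewrite /adjn eqxx //|lia|lia].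
case: (eqVneq x (c + 4)) => E1.
  have D8 : x + 8 <= y by move: A; rewrite /adjn; lia.
  exists y; rewrite F1_U0; [|lia|lia]. rewrite F1_U0; [split; [done|rewrite /adjn eqxx //|lia|lia]|lia|lia].
case: (eqVneq x (c + 1)) => E2.
  have D8 : x + 7 <= y by move: A; rewrite /adjn; lia.
  exists y; rewrite F1_U3; [|lia|lia]. rewrite F1_U0; [split; [done|rewrite /adjn eqxx //|lia|lia]|lia|lia].
case: (eqVneq x (c + 3)) => E3.
  have D8 : x + 5 <= y by move: A; rewrite /adjn; lia.
  exists y; rewrite F1_U1; [|lia|lia]. rewrite F1_U0; [split; [done|rewrite /adjn eqxx //|lia|lia]|lia|lia].
case: (eqVneq c (x + 4)) => E4.
  have V : F1 n x y = n - 7 - x by rewrite F1_U0; lia.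
  case: (ltnP (y + 1) n) => T.
    exists (y + 1); rewrite V F1_U1; [split; [lia|rewrite /adjn; lia|lia|lia]|lia|lia].
  case: (eqVneq y (c + 4)) => D4.
    exists (y - 3); rewrite V F1_adj; [split; [lia|rewrite /adjn; lia|lia|lia]|rewrite /adjn; lia|lia].
  exists (y - 3); rewrite V F1_U1; [split; [lia|rewrite /adjn; lia|lia|lia]|lia|lia].
case: (eqVneq c (x + 1)) => E5.
  have V : F1 n x y = n - 4 - x by rewrite F1_U1; lia.
  case: (ltnP (y + 1) n) => T.
    exists (y + 1); rewrite V F1_U1; [split; [lia|rewrite /adjn; lia|lia|lia]|lia|lia].
  case: (eqVneq y (c + 4)) => D4.
    exists (y - 3); rewrite V F1_adj; [split; [lia|rewrite /adjn; lia|lia|lia]|rewrite /adjn; lia|lia].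
  exists (y - 3); rewrite V F1_U1; [split; [lia|rewrite /adjn; lia|lia|lia]|lia|lia].
case: (eqVneq c (x + 3)) => E6.
  have V : F1 n x y = n - 6 - x by rewrite F1_U3; lia.
  case: (ltnP (y + 1) n) => T.
    exists (y + 1); rewrite V F1_U1; [split; [lia|rewrite /adjn; lia|lia|lia]|lia|lia].
  case: (eqVneq y (c + 4)) => D4.
    exists (y - 3); rewrite V F1_adj; [split; [lia|rewrite /adjn; lia|lia|lia]|rewrite /adjn; lia|lia].
  exists (y - 3); rewrite V F1_U1; [split; [lia|rewrite /adjn; lia|lia|lia]|lia|lia].
have [X0 C2] : x = 0 /\ c = 2.
  move: Axc E0 E1 E2 E3 E4 E5 E6 Hc1; rewrite /adjn; lia.
subst x c.
exists (y + 1); rewrite F1_Z2; [|lia|lia]. rewrite F1_U1; [split; [lia|rewrite /adjn; lia|lia|lia]|lia|lia].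
Qed.

Lemma RB n x y c : 10 <= n -> n %% 4 = 2 -> x < n -> y < n -> c < n ->
  ~~ adjn x y -> adjn x c ->
  exists y', [/\ y' < n, adjn y y', y' != c & F1 n x y <= (F1 n c y').+1].
Proof.
move=> Hn Hn4 Hx Hy Hc A Axc.
case: (eqVneq c x) => Ecx.
  subst c; exists y; split=> //; first by rewrite /adjn eqxx.
  by move: A; rewrite /adjn; lia.
case: (posnP c) => C0.
  subst c. apply: RB0 => //. by rewrite eq_sym.
case H: ((c + 4 <= y) && ((y - c) %% 4 == 0)).
  move/andP: H => [H1 /eqP H2]. exact: CHASE.
have Yc : y != c by move: A Axc; rewrite /adjn; lia.
have [y' [Y1 Y2 Y3]] := HIDE Hn C0 Hc Hy Yc (negbT H).
exists y'; split => //.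
  apply/eqP => E; move: Y3; rewrite E F1_eq0 /Bz; lia.
rewrite Y3. have := @F1_le_Bz n x y (ltnW (ltnW (ltnW (ltnW (ltnW Hn))))).
have : x <= c + 4 by move: Axc; rewrite /adjn; lia.
rewrite /Bz; lia.
Qed.

Definition M (n : nat) := n - 4 + (n + 1) %/ 4.

Lemma Bz_le_M n x : x < n -> Bz n x <= M n.
Proof. rewrite /Bz /M; lia. Qed.

Lemma F1_le_M n x y : 10 <= n -> x < n -> F1 n x y <= M n.
Proof. move=> Hn Hx; apply: leq_trans (Bz_le_M Hx); apply: F1_le_Bz; lia. Qed.

Lemma F1_0_le4 n y : 10 <= n -> F1 n 0 y <= n - 4.
Proof. move=> Hn; have := @F1_le_Bz n 0 y; rewrite /Bz; lia. Qed.

Lemma ESC n x c : 10 <= n -> x < n -> c < n -> x != c -> ~~ ((x == n - 1) && (c == n - 5)) ->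
  exists x', [/\ x' < n, adjn x x' & ~~ adjn c x'].
Proof.
move=> Hn Hx Hc Hxc H.
case A: (adjn c x); last by exists x; split => //; [rewrite /adjn eqxx|rewrite A].
case: (eqVneq x (c + 1)) => E1.
  case: (eqVneq c 0) => C0.
    exists 5; split; [lia|rewrite /adjn; lia|rewrite /adjn; lia].
  case: (ltnP (x + 1) n) => T.
    exists (x + 1); split; [lia|rewrite /adjn; lia|rewrite /adjn; lia].
  exists (x - 3); split; [lia|rewrite /adjn; lia|rewrite /adjn; lia].
case: (eqVneq c (x + 1)) => E2.
  case: (eqVneq x 1) => X1.
    exists 4; split; [lia|rewrite /adjn; lia|rewrite /adjn; lia].
  case: (eqVneq x 0) => X0.
    exists 3; split; [lia|rewrite /adjn; lia|rewrite /adjn; lia].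
  exists (x - 1); split; [lia|rewrite /adjn; lia|rewrite /adjn; lia].
case: (eqVneq x (c + 3)) => E3.
  case: (eqVneq c 0) => C0.
    exists (x + 3); split; [lia|rewrite /adjn; lia|rewrite /adjn; lia].
  exists (x - 1); split; [lia|rewrite /adjn; lia|rewrite /adjn; lia].
case: (eqVneq c (x + 3)) => E4.
  exists (x + 1); split; [lia|rewrite /adjn; lia|rewrite /adjn; lia].
case: (eqVneq x (c + 4)) => E5.
  exists (x + 1); split; [lia|rewrite /adjn; lia|rewrite /adjn; lia].
case: (eqVneq c (x + 4)) => E6.
  case: (eqVneq x 0) => X0.
    exists 2; split; [lia|rewrite /adjn; lia|rewrite /adjn; lia].
  exists (x - 1); split; [lia|rewrite /adjn; lia|rewrite /adjn; lia].
move: A; rewrite /adjn => A.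
case: (eqVneq c 0) => C0.
  exists 5; split; [lia|rewrite /adjn; lia|rewrite /adjn; lia].
exists 4; split; [lia|rewrite /adjn; lia|rewrite /adjn; lia].
Qed.

Lemma NEAR n y : 10 <= n -> y < n -> ~~ adjn (n - 5) y -> exists z, adjn y z /\ z + 6 <= n.
Proof.
move=> Hn Hy A.
case: (leqP (y + 6) n) => H; first by exists y; rewrite /adjn eqxx.
exists (y - 3); split; [move: A; rewrite /adjn; lia|move: A; rewrite /adjn; lia].
Qed.

Lemma TBZ n a z : 10 <= n -> n %% 4 = 2 -> n - 4 <= a -> a < n -> (z + 5 <= a \/ z = a + 2) ->
  F1 n a z = M n.
Proof.
move=> Hn Hn4 Ha Ha2 [H|H].
  rewrite F1_Bb; [rewrite /Bz /M; lia|lia].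
rewrite F1_Ba; [rewrite /Bz /M; lia|lia|lia|lia].
Qed.

Lemma INIT n c : 10 <= n -> c < n -> exists p, [/\ p < n, ~~ adjn c p & n - 4 <= F1 n c p].
Proof.
move=> Hn Hc.
case: (eqVneq c 0) => C0.
  exists 5; subst; rewrite F1_U1; [split; [lia|rewrite /adjn; lia|lia]|lia|lia].
case: (leqP c 4) => C4.
  exists (c + 2); rewrite F1_Ba; [split; [lia|rewrite /adjn; lia|rewrite /Bz; lia]|lia|lia|lia].
exists 0; rewrite F1_Bb; [split; [lia|rewrite /adjn; lia|rewrite /Bz; lia]|lia].
Qed.

Lemma H7_small p q : (p, q) \in H7_edges -> p <= 7 /\ q <= 7 /\ p < q.
Proof. rewrite /H7_edges !inE !xpair_eqE. lia. Qed.

Lemma hedge_big a b : 7 < b -> hedge a b = [|| a == b - 1, a == b - 3 | a == b - 4].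
Proof. rewrite /hedge => H; by rewrite leqNgt H. Qed.

Lemma Hg_small a b : a < 7 -> b < 7 ->
   [|| a == b, hedge a.+1 b.+1 | hedge b.+1 a.+1] = adjn a b.
Proof.
by case: a => [|[|[|[|[|[|[|a]]]]]]]; case: b => [|[|[|[|[|[|[|b]]]]]]].
Qed.

Lemma HgE a b : [|| a == b, hedge a.+1 b.+1 | hedge b.+1 a.+1] = adjn a b.
Proof.
case: (ltnP a 7) => Ha; case: (ltnP b 7) => Hb.
- exact: Hg_small.
- rewrite (hedge_big _ (_ : 7 < b.+1)) //.
  have -> : hedge b.+1 a.+1 = false.
    rewrite /hedge (_ : a.+1 <= 7) //. apply/negP => /H7_small; lia.
  rewrite /adjn; apply/idP/idP; lia.
- rewrite (hedge_big _ (_ : 7 < a.+1)) //.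
  have -> : hedge a.+1 b.+1 = false.
    rewrite /hedge (_ : b.+1 <= 7) //. apply/negP => /H7_small; lia.
  rewrite /adjn; apply/idP/idP; lia.
- rewrite !hedge_big //. rewrite /adjn; apply/idP/idP; lia.
Qed.

Lemma HgraphE n (x y : 'I_n) : Hgraph n x y = adjn x y.
Proof. by rewrite /Hgraph -HgE. Qed.

Definition Tc (n a b : nat) : bool :=
  (n - 4 <= a) && has (fun z => adjn b z && ((z + 5 <= a) || (z == a + 2))) (iota 0 n).

Definition Q2 (n c a b : nat) : nat :=
  if ~~ adjn c a && ~~ adjn c b then minn (F1 n c a) (F1 n c b) + M n
  else if adjn c a && ~~ adjn c b then (if Tc n a b then (M n).+1 else 0)
  else if ~~ adjn c a && adjn c b then (if Tc n b a then (M n).+1 else 0)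
  else if (a != b) && Tc n a b && Tc n b a then (M n).+1 else 0.

Lemma T_intro n a b z : n - 4 <= a -> z < n -> adjn b z -> (z + 5 <= a \/ z = a + 2) -> Tc n a b.
Proof.
move=> H1 H2 H3 H4; rewrite /Tc H1 /=; apply/hasP; exists z; first by rewrite mem_iota; lia.
rewrite H3 /=; lia.
Qed.

Lemma T_elim n a b : Tc n a b -> n - 4 <= a /\ exists z, [/\ z < n, adjn b z & (z + 5 <= a \/ z = a + 2)].
Proof.
case/andP => H1 /hasP [z]; rewrite mem_iota => Hz /andP [H2 H3]; split => //.
exists z; split => //; lia.
Qed.

Lemma RESP n c x c' : 10 <= n -> n %% 4 = 2 -> c < n -> x < n -> c' < n -> ~~ adjn c x -> adjn c c' ->
  (exists x', [/\ x' < n, adjn x x', ~~ adjn c' x' & F1 n c x <= (F1 n c' x').+1]) \/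
  [/\ x = n - 1, c' = n - 5 & F1 n c x = 2].
Proof.
move=> Hn Hn4 Hc Hx Hc' A Acc'.
have F2 := F1_ge2 Hn Hc Hx A.
case: (leqP 3 (F1 n c x)) => F3.
  have [x' [X1 X2 X3 X4]] := RB Hn Hn4 Hc Hx Hc' A Acc'.
  left; exists x'; split => //. apply/negP => B.
  have := F1_adj_le n B; lia.
case E: ((x == n - 1) && (c' == n - 5)).
  right; move/andP: E => [/eqP Ex /eqP Ec]; split => //; lia.
have Xc' : x != c' by apply/negP => /eqP E'; move: A; rewrite E' Acc'.
have [x' [X1 X2 X3]] := ESC Hn Hx Hc' Xc' (negbT E).
left; exists x'; split => //.
have := F1_ge2 Hn Hc' X1 X3; lia.
Qed.

Lemma Q2_nn n c a b : ~~ adjn c a -> ~~ adjn c b -> Q2 n c a b = minn (F1 n c a) (F1 n c b) + M n.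
Proof. by rewrite /Q2 => -> ->. Qed.

Lemma Q2_an n c a b : adjn c a -> ~~ adjn c b -> Q2 n c a b = if Tc n a b then (M n).+1 else 0.
Proof. by rewrite /Q2 => -> ->. Qed.

Lemma Q2_na n c a b : ~~ adjn c a -> adjn c b -> Q2 n c a b = if Tc n b a then (M n).+1 else 0.
Proof. by rewrite /Q2 => /negbTE -> ->. Qed.

Lemma Q2_aa n c a b : adjn c a -> adjn c b -> Q2 n c a b = if (a != b) && Tc n a b && Tc n b a then (M n).+1 else 0.
Proof. by rewrite /Q2 => -> ->. Qed.

Lemma adjn_top n : 10 <= n -> adjn (n - 5) (n - 1).
Proof. rewrite /adjn; lia. Qed.

Lemma T_near n b' : 10 <= n -> b' < n -> ~~ adjn (n - 5) b' -> Tc n (n - 1) b'.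
Proof.
move=> Hn Hb A. have [z [Z1 Z2]] := NEAR Hn Hb A.
apply: (T_intro (z := z)) => //; lia.
Qed.

Lemma ESC2 n a b c' : 10 <= n -> n %% 4 = 2 -> a < n -> b < n -> c' < n -> a != c' -> b != c' -> a != b ->
  exists a' b', [/\ a' < n, b' < n, adjn a a', adjn b b' & [/\ a' != c', b' != c' & M n <= Q2 n c' a' b']].
Proof.
move=> Hn Hn4 Ha Hb Hc Hac Hbc Hab.
have nadj_ne : forall z, ~~ adjn c' z -> z != c'.
  by move=> z; apply: contra => /eqP ->; rewrite /adjn eqxx.
case Fa: ((a == n - 1) && (c' == n - 5)).
  move/andP: Fa => [/eqP Ea /eqP Ec].
  have Fb : ~~ ((b == n - 1) && (c' == n - 5)) by rewrite -Ea eq_sym (negbTE Hab).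
  have [b' [B1 B2 B3]] := ESC Hn Hb Hc Hbc Fb.
  exists a, b'; split => //; first by rewrite /adjn eqxx.
  split => //; first exact: nadj_ne.
  rewrite Q2_an //; last by rewrite Ea Ec adjn_top.
  have B3' : ~~ adjn (n - 5) b' by rewrite -Ec.
  by rewrite Ea (T_near Hn B1 B3').
case Fb: ((b == n - 1) && (c' == n - 5)).
  move/andP: Fb => [/eqP Eb /eqP Ec].
  have [a' [A1 A2 A3]] := ESC Hn Ha Hc Hac (negbT Fa).
  exists a', b; split => //; first by rewrite /adjn eqxx.
  split => //; first exact: nadj_ne.
  rewrite Q2_na //; last by rewrite Eb Ec adjn_top.
  have A3' : ~~ adjn (n - 5) a' by rewrite -Ec.
  by rewrite Eb (T_near Hn A1 A3').
have [a' [A1 A2 A3]] := ESC Hn Ha Hc Hac (negbT Fa).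
have [b' [B1 B2 B3]] := ESC Hn Hb Hc Hbc (negbT Fb).
exists a', b'; split => //; split; try exact: nadj_ne.
rewrite Q2_nn //; lia.
Qed.

Lemma S2_step n c a b c' : 10 <= n -> n %% 4 = 2 -> c < n -> a < n -> b < n -> c' < n ->
  ~~ adjn c a -> ~~ adjn c b -> adjn c c' ->
  exists a' b', [/\ a' < n, b' < n, adjn a a', adjn b b' & [/\ a' != c', b' != c' & Q2 n c a b <= (Q2 n c' a' b').+1]].
Proof.
move=> Hn Hn4 Hc Ha Hb Hc' Aa Ab Acc'.
have nadj_ne : forall z, ~~ adjn c' z -> z != c'.
  by move=> z; apply: contra => /eqP ->; rewrite /adjn eqxx.
have Fa2 := F1_ge2 Hn Hc Ha Aa. have Fb2 := F1_ge2 Hn Hc Hb Ab.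
rewrite Q2_nn //.
case: (RESP Hn Hn4 Hc Ha Hc' Aa Acc') => [[a' [A1 A2 A3 A4]]|[Ea Ec Fa]];
case: (RESP Hn Hn4 Hc Hb Hc' Ab Acc') => [[b' [B1 B2 B3 B4]]|[Eb Ec' Fb]].
- exists a', b'; split => //; split; try exact: nadj_ne.
  rewrite Q2_nn //; lia.
- exists a', b; split => //; first by rewrite /adjn eqxx.
  split; [exact: nadj_ne| by rewrite Eb Ec'; rewrite /adjn; lia|].
  rewrite Q2_na //; last by rewrite Eb Ec' adjn_top.
  have A3' : ~~ adjn (n - 5) a' by rewrite -Ec'.
  rewrite Fb Eb (T_near Hn A1 A3'); lia.
- exists a, b'; split => //; first by rewrite /adjn eqxx.
  split; [by rewrite Ea Ec; rewrite /adjn; lia|exact: nadj_ne|].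
  rewrite Q2_an //; last by rewrite Ea Ec adjn_top.
  have B3' : ~~ adjn (n - 5) b' by rewrite -Ec.
  rewrite Fa Ea (T_near Hn B1 B3'); lia.
- exists (n - 4), (n - 2); split; [lia|lia|rewrite Ea /adjn; lia|rewrite Eb /adjn; lia|].
  split; [rewrite Ec; lia|rewrite Ec; lia|].
  rewrite Q2_aa; [|rewrite Ec /adjn; lia|rewrite Ec /adjn; lia].
  have -> : (n - 4 != n - 2) by lia.
  rewrite (@T_intro n (n - 4) (n - 2) (n - 2)); [|lia|lia|by rewrite /adjn eqxx|lia].
  rewrite (@T_intro n (n - 2) (n - 4) (n - 7)); [|lia|lia|rewrite /adjn; lia|lia].
  rewrite /=; lia.
Qed.

Section G.
Variables (V : finType) (adj : rel V).

Definition cap1 (c : V) (o : option V) := if o == Some c then None else o.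
Definition mv (o o' : option V) : bool :=
  match o, o' with None, None => true | Some x, Some y => adj x y | _, _ => false end.
Definition r0 : 'I_2 := @Ordinal 2 0 isT.
Definition r1 : 'I_2 := @Ordinal 2 1 isT.
Definition mk2 (o0 o1 : option V) : rstate V 2 := [ffun i => if i == r0 then o0 else o1].

Lemma I2_cases (i : 'I_2) : i = r0 \/ i = r1.
Proof. case: i => [[|[|k]] Hk]; [left|right|]; try by apply: val_inj. by []. Qed.

Lemma mk2E (R : rstate V 2) : R = mk2 (R r0) (R r1).
Proof. apply/ffunP => i; rewrite ffunE; by case: (I2_cases i) => ->. Qed.

Lemma mk2_0 o0 o1 : mk2 o0 o1 r0 = o0. Proof. by rewrite ffunE. Qed.
Lemma mk2_1 o0 o1 : mk2 o0 o1 r1 = o1. Proof. by rewrite ffunE. Qed.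

Lemma capture_mk2 c o0 o1 : capture c (mk2 o0 o1) = mk2 (cap1 c o0) (cap1 c o1).
Proof. apply/ffunP => i; rewrite !ffunE; by case: (I2_cases i) => ->. Qed.

Lemma allcap_mk2 o0 o1 : all_captured (mk2 o0 o1) = (o0 == None) && (o1 == None).
Proof.
apply/forallP/andP => [H|[H0 H1] i].
  by split; [have := H r0|have := H r1]; rewrite ffunE.
rewrite ffunE; by case: (I2_cases i) => ->.
Qed.

Lemma move_mk2 a b a' b' : robber_move adj (mk2 a b) (mk2 a' b') = mv a a' && mv b b'.
Proof.
apply/forallP/andP => [H|[H0 H1] i].
  by split; [have := H r0|have := H r1]; rewrite !ffunE /=.
rewrite !ffunE; case: (I2_cases i) => -> /=; by move: H0 H1; case: a a' b b' => [?|] [?|] [?|] [?|].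
Qed.

Lemma cap1_valid c o : cap1 c o != Some c.
Proof. rewrite /cap1; by case: (eqVneq o (Some c)). Qed.

Definition valid2 (c : V) (o0 o1 : option V) := (o0 != Some c) && (o1 != Some c).

Section Upper.
Variable P : V -> option V -> option V -> nat.
Hypothesis HP : forall c o0 o1, valid2 c o0 o1 -> ~~ ((o0 == None) && (o1 == None)) ->
  0 < P c o0 o1 /\ exists c', adj c c' /\ forall o0' o1', mv (cap1 c' o0) o0' -> mv (cap1 c' o1) o1' ->
     P c' (cap1 c' o0') (cap1 c' o1') < P c o0 o1.

Lemma upper k : forall c o0 o1, valid2 c o0 o1 -> P c o0 o1 <= k -> win_within adj k c (mk2 o0 o1).
Proof.
elim: k => [|k IH] c o0 o1 Hv Hk.
  rewrite /= allcap_mk2 orbF. apply/negPn/negP => Hn. have [H _] := HP Hv Hn. by rewrite leqn0 in Hk; rewrite (eqP Hk) in H.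
rewrite /= allcap_mk2. case E: ((o0 == None) && (o1 == None)) => //=.
have [_ [c' [Hc' HR]]] := HP Hv (negbT E).
apply/existsP; exists c'; rewrite Hc' /=. apply/orP; right.
apply/forallP => R2; apply/implyP. rewrite capture_mk2 (mk2E R2) move_mk2 => /andP [H0 H1].
rewrite capture_mk2; apply: IH.
  by rewrite /valid2 !cap1_valid.
have H := HR _ _ H0 H1. rewrite -ltnS. exact: leq_trans H Hk.
Qed.
End Upper.

Section Lower.
Variable Q : V -> option V -> option V -> nat.
Hypothesis HQ0 : forall c, Q c None None = 0.
Hypothesis HQ : forall c o0 o1, valid2 c o0 o1 -> 1 < Q c o0 o1 -> forall c', adj c c' ->
  exists o0' o1', [/\ mv (cap1 c' o0) o0', mv (cap1 c' o1) o1' &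
     Q c o0 o1 <= (Q c' (cap1 c' o0') (cap1 c' o1')).+1].

Lemma lower k : forall c o0 o1, valid2 c o0 o1 -> k < Q c o0 o1 -> ~~ win_within adj k c (mk2 o0 o1).
Proof.
have NN : forall c o0 o1, 0 < Q c o0 o1 -> ~~ ((o0 == None) && (o1 == None)).
  move=> c [?|] [?|] //. by rewrite HQ0.
elim: k => [|k IH] c o0 o1 Hv Hk.
  rewrite /= allcap_mk2 orbF; exact: NN Hk.
rewrite /= allcap_mk2 negb_or (NN _ _ _ (ltn_trans _ Hk)) //=.
rewrite negb_exists; apply/forallP => c'; apply/negP => /andP [Hc' H].
have [o0' [o1' [H0 H1 HQ']]] := HQ Hv (leq_ltn_trans (ltn0Sn k) Hk) Hc'.
have Hk' : k < Q c' (cap1 c' o0') (cap1 c' o1') by rewrite -ltnS; apply: leq_trans Hk HQ'.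
move: H; rewrite capture_mk2 allcap_mk2 => /orP [/andP [/eqP E0 /eqP E1]|].
  clear HQ'; move: H0 H1 Hk'; rewrite E0 E1. by case: o0' => [?|]; case: o1' => [?|] //=; rewrite /cap1 /= HQ0.
move/forallP => /(_ (mk2 o0' o1')); rewrite move_mk2 H0 H1 /= capture_mk2.
apply/negP; apply: IH => //. by rewrite /valid2 !cap1_valid.
Qed.
End Lower.
End G.

Section Conc.
Variable n : nat.
Hypothesis Hn : 10 <= n.
Hypothesis Hn4 : n %% 4 = 2.

Local Notation adjG := (Hgraph n).

Definition Po (c : 'I_n) (o0 o1 : option 'I_n) : nat :=
  match o0, o1 with
  | Some a, Some b => F1 n c a + M n
  | Some a, None => F1 n c a
  | None, Some b => F1 n c b
  | None, None => 0 end.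

Definition Qo (c : 'I_n) (o0 o1 : option 'I_n) : nat :=
  match o0, o1 with
  | Some a, Some b => Q2 n c a b
  | Some a, None => F1 n c a
  | None, Some b => F1 n c b
  | None, None => 0 end.

Lemma cap1S (c x : 'I_n) : cap1 c (Some x) = if (x : nat) == c then None else Some x.
Proof. rewrite /cap1. have -> : (Some x == Some c) = (x == c) by []. by rewrite -val_eqE. Qed.

Lemma someE (x y : 'I_n) : (Some x != Some y) = ((x : nat) != y).
Proof. have -> : (Some x == Some y) = (x == y) by []. by rewrite -val_eqE. Qed.

Lemma valid_ss c (a b : 'I_n) : valid2 c (Some a) (Some b) = ((a : nat) != c) && ((b : nat) != c).
Proof. by rewrite /valid2 !someE. Qed.
Lemma valid_sn c (a : 'I_n) : valid2 c (Some a) None = ((a : nat) != c).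
Proof. by rewrite /valid2 !someE andbT. Qed.
Lemma valid_ns c (b : 'I_n) : valid2 c None (Some b) = ((b : nat) != c).
Proof. by rewrite /valid2 !someE. Qed.

Lemma mvN o : mv adjG None o -> o = None.
Proof. by case: o. Qed.

Lemma mvS (x : 'I_n) o : mv adjG (Some x) o -> exists2 y : 'I_n, o = Some y & adjn x y.
Proof. case: o => [y|] //= H; exists y => //; by rewrite -HgraphE. Qed.

Lemma F1_pos (x y : 'I_n) : (x : nat) != y -> 0 < F1 n x y.
Proof.
move=> H. case A: (adjn x y); first by rewrite F1_adj.
have := @F1_ge2 n x y Hn (ltn_ord x) (ltn_ord y) (negbT A). lia.
Qed.

Lemma F1_nadj x y : 1 < F1 n x y -> ~~ adjn x y.
Proof. apply: contraTN => A; have := F1_adj_le n A; lia. Qed.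

Lemma chase (c r : 'I_n) : (r : nat) != c -> exists c' : 'I_n, adjG c c' /\
  forall o', mv adjG (cap1 c' (Some r)) o' ->
    match cap1 c' o' with None => true | Some r' => F1 n c' r' < F1 n c r end.
Proof.
move=> Hrc. case A: (adjn c r).
  exists r; split; first by rewrite HgraphE.
  move=> o'; rewrite cap1S eqxx => /mvN ->. done.
have NA : ~~ adjn c r by rewrite A.
have [G1 G2 G3] := CB Hn (ltn_ord c) (ltn_ord r) NA.
exists (Ordinal G1); split; first by rewrite HgraphE.
have Hr : (r : nat) != g n c r by apply/negP => /eqP E; move: G2; rewrite -E A.
move=> o'; rewrite cap1S (negbTE Hr) => /mvS [r' -> Hrr'].
rewrite cap1S /=. case: eqP => // E.
case: (G3 r' (ltn_ord r') Hrr') => //.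
Qed.

Lemma HP c o0 o1 : valid2 c o0 o1 -> ~~ ((o0 == None) && (o1 == None)) ->
  0 < Po c o0 o1 /\ exists c', adjG c c' /\ forall o0' o1', mv adjG (cap1 c' o0) o0' -> mv adjG (cap1 c' o1) o1' ->
     Po c' (cap1 c' o0') (cap1 c' o1') < Po c o0 o1.
Proof.
rewrite /Po; case: o0 => [a|]; case: o1 => [b|] //.
- rewrite valid_ss => /andP [Ha' Hb'] _.
  have P1 := @F1_pos c a (ltac:(by rewrite eq_sym)).
  split; first by lia.
  have [c' [Hc' Hm]] := chase Ha'. exists c'; split => // o0' o1' H0 H1.
  have := Hm _ H0. case: (cap1 c' o0') => [a''|] Ha'';
  case: (cap1 c' o1') => [b''|] /=.
  + lia.
  + lia.
  + have := @F1_le_M n c' b'' Hn (ltn_ord c'); lia.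
  + lia.
- rewrite valid_sn => Ha' _.
  have P1 := @F1_pos c a (ltac:(by rewrite eq_sym)). split => //.
  have [c' [Hc' Hm]] := chase Ha'. exists c'; split => // o0' o1' H0 H1.
  rewrite /cap1 /= in H1. rewrite (mvN H1).
  have := Hm _ H0. case: (cap1 c' o0') => [a''|] Ha'' /=; lia.
- rewrite valid_ns => Hb' _.
  have P1 := @F1_pos c b (ltac:(by rewrite eq_sym)). split => //.
  have [c' [Hc' Hm]] := chase Hb'. exists c'; split => // o0' o1' H0 H1.
  rewrite /cap1 /= in H0. rewrite (mvN H0).
  have := Hm _ H1. case: (cap1 c' o1') => [b''|] Hb'' /=; lia.
Qed.

Lemma resp_both (c' a b : 'I_n) (a' b' : nat) : a' < n -> b' < n ->
  (a : nat) != c' -> (b : nat) != c' -> adjn a a' -> adjn b b' -> a' != c' -> b' != c' ->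
  exists o0' o1', [/\ mv adjG (cap1 c' (Some a)) o0', mv adjG (cap1 c' (Some b)) o1' &
      Qo c' (cap1 c' o0') (cap1 c' o1') = Q2 n c' a' b'].
Proof.
move=> Ha' Hb' Hac Hbc Aa Ab Hac' Hbc'.
exists (Some (Ordinal Ha')), (Some (Ordinal Hb')).
by rewrite !cap1S (negbTE Hac) (negbTE Hbc) /= (negbTE Hac') (negbTE Hbc') /= !HgraphE.
Qed.

Lemma resp_capA (a b : 'I_n) (z : nat) : z < n -> (b : nat) != a -> adjn b z -> z != a ->
  exists o0' o1', [/\ mv adjG (cap1 a (Some a)) o0', mv adjG (cap1 a (Some b)) o1' &
      Qo a (cap1 a o0') (cap1 a o1') = F1 n a z].
Proof.
move=> Hz Hba A Hza. exists None, (Some (Ordinal Hz)).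
by rewrite !cap1S eqxx (negbTE Hba) /= (negbTE Hza) /= HgraphE.
Qed.

Lemma resp_capB (a b : 'I_n) (z : nat) : z < n -> (a : nat) != b -> adjn a z -> z != b ->
  exists o0' o1', [/\ mv adjG (cap1 b (Some a)) o0', mv adjG (cap1 b (Some b)) o1' &
      Qo b (cap1 b o0') (cap1 b o1') = F1 n b z].
Proof.
move=> Hz Hab A Hzb. exists (Some (Ordinal Hz)), None.
by rewrite !cap1S eqxx (negbTE Hab) /= (negbTE Hzb) /= HgraphE.
Qed.

Lemma Tcap (a b : 'I_n) : Tc n a b -> exists z, [/\ z < n, adjn b z, z != a & F1 n a z = M n].
Proof.
case/T_elim => Ha [z [Z1 Z2 Z3]]. exists z; split => //; first by lia.
apply: TBZ => //; exact: ltn_ord.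
Qed.

Lemma HQ c o0 o1 : valid2 c o0 o1 -> 1 < Qo c o0 o1 -> forall c', adjG c c' ->
  exists o0' o1', [/\ mv adjG (cap1 c' o0) o0', mv adjG (cap1 c' o1) o1' &
     Qo c o0 o1 <= (Qo c' (cap1 c' o0') (cap1 c' o1')).+1].
Proof.
move=> Hv HQ1 c'; rewrite HgraphE => Hcc'.
have nadj_ne : forall z : nat, ~~ adjn c z -> z != c'.
  by move=> z; apply: contra => /eqP ->.
rewrite /Qo in HQ1.
case: o0 Hv HQ1 => [a|]; case: o1 => [b|] //.
-
  rewrite valid_ss => /andP [Ha' Hb'] HQ1.
  case Aa: (adjn c a); case Ab: (adjn c b).
  +
    move: HQ1; rewrite Q2_aa //.
    case E: ((a : nat) != b); case Tab: (Tc n a b); case Tba: (Tc n b a) => //= _.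
    have QV : Q2 n c a b = (M n).+1 by rewrite Q2_aa // E Tab Tba.
    case: (eqVneq (c' : nat) a) => Ec'a.
      have -> : c' = a by apply: val_inj.
      have [z [Z1 Z2 Z3 Z4]] := Tcap Tab.
      have [o0' [o1' [H0 H1 H2]]] := @resp_capA a b z Z1 (ltac:(by rewrite eq_sym)) Z2 Z3.
      exists o0', o1'; split => //. by rewrite QV H2 Z4.
    case: (eqVneq (c' : nat) b) => Ec'b.
      have -> : c' = b by apply: val_inj.
      have [z [Z1 Z2 Z3 Z4]] := Tcap Tba.
      have [o0' [o1' [H0 H1 H2]]] := @resp_capB a b z Z1 E Z2 Z3.
      exists o0', o1'; split => //. by rewrite QV H2 Z4.
    have [a' [b' [A1 B1 A2 B2 [A3 B3 Q3]]]] :=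
      ESC2 Hn Hn4 (ltn_ord a) (ltn_ord b) (ltn_ord c') (ltac:(by rewrite eq_sym)) (ltac:(by rewrite eq_sym)) E.
    have [o0' [o1' [H0 H1 H2]]] := @resp_both c' a b a' b' A1 B1 (ltac:(by rewrite eq_sym)) (ltac:(by rewrite eq_sym)) A2 B2 A3 B3.
    exists o0', o1'; split => //. rewrite QV H2; lia.
  +
    move: HQ1; rewrite Q2_an ?Ab //.
    case Tab: (Tc n a b) => //= _.
    have QV : Q2 n c a b = (M n).+1 by rewrite Q2_an ?Ab // Tab.
    have Eab : (a : nat) != b by apply/negP => /eqP E; move: Ab; rewrite -E Aa.
    have Hbc' := nadj_ne _ (negbT Ab).
    case: (eqVneq (c' : nat) a) => Ec'a.
      have -> : c' = a by apply: val_inj.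
      have [z [Z1 Z2 Z3 Z4]] := Tcap Tab.
      have [o0' [o1' [H0 H1 H2]]] := @resp_capA a b z Z1 (ltac:(by rewrite eq_sym)) Z2 Z3.
      exists o0', o1'; split => //. by rewrite QV H2 Z4.
    have [a' [b' [A1 B1 A2 B2 [A3 B3 Q3]]]] :=
      ESC2 Hn Hn4 (ltn_ord a) (ltn_ord b) (ltn_ord c') (ltac:(by rewrite eq_sym)) Hbc' Eab.
    have [o0' [o1' [H0 H1 H2]]] := @resp_both c' a b a' b' A1 B1 (ltac:(by rewrite eq_sym)) Hbc' A2 B2 A3 B3.
    exists o0', o1'; split => //. rewrite QV H2; lia.
  +
    move: HQ1; rewrite Q2_na ?Aa //.
    case Tba: (Tc n b a) => //= _.
    have QV : Q2 n c a b = (M n).+1 by rewrite Q2_na ?Aa // Tba.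
    have Eab : (a : nat) != b by apply/negP => /eqP E; move: Aa; rewrite E Ab.
    have Hac' := nadj_ne _ (negbT Aa).
    case: (eqVneq (c' : nat) b) => Ec'b.
      have -> : c' = b by apply: val_inj.
      have [z [Z1 Z2 Z3 Z4]] := Tcap Tba.
      have [o0' [o1' [H0 H1 H2]]] := @resp_capB a b z Z1 Eab Z2 Z3.
      exists o0', o1'; split => //. by rewrite QV H2 Z4.
    have [a' [b' [A1 B1 A2 B2 [A3 B3 Q3]]]] :=
      ESC2 Hn Hn4 (ltn_ord a) (ltn_ord b) (ltn_ord c') Hac' (ltac:(by rewrite eq_sym)) Eab.
    have [o0' [o1' [H0 H1 H2]]] := @resp_both c' a b a' b' A1 B1 Hac' (ltac:(by rewrite eq_sym)) A2 B2 A3 B3.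
    exists o0', o1'; split => //. rewrite QV H2; lia.
  +
    have [a' [b' [A1 B1 A2 B2 [A3 B3 Q3]]]] :=
      S2_step Hn Hn4 (ltn_ord c) (ltn_ord a) (ltn_ord b) (ltn_ord c') (negbT Aa) (negbT Ab) Hcc'.
    have [o0' [o1' [H0 H1 H2]]] := @resp_both c' a b a' b' A1 B1 (nadj_ne _ (negbT Aa)) (nadj_ne _ (negbT Ab)) A2 B2 A3 B3.
    exists o0', o1'; split => //. rewrite H2; exact: Q3.
-
  move=> _ HQ1. have NA := F1_nadj HQ1.
  have [a' [A1 A2 A3 A4]] := RB Hn Hn4 (ltn_ord c) (ltn_ord a) (ltn_ord c') NA Hcc'.
  exists (Some (Ordinal A1)), None.
  rewrite !cap1S (negbTE (nadj_ne _ NA)) /= (negbTE A3) /= HgraphE; split => //.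
-
  move=> _ HQ1. have NA := F1_nadj HQ1.
  have [b' [B1 B2 B3 B4]] := RB Hn Hn4 (ltn_ord c) (ltn_ord b) (ltn_ord c') NA Hcc'.
  exists None, (Some (Ordinal B1)).
  rewrite !cap1S (negbTE (nadj_ne _ NA)) /= (negbTE B3) /= HgraphE; split => //.
Qed.

End Conc.

Lemma ffun_mk2 (V : finType) (r : {ffun 'I_2 -> V}) :
  [ffun i => Some (r i)] = mk2 (Some (r r0)) (Some (r r1)).
Proof. apply/ffunP => i; rewrite !ffunE; by case: (I2_cases i) => ->. Qed.

Theorem mainTheorem6 (l : nat) (hl : 2 <= l) :
  capt_is (Hgraph (4 * l + 2)) 2 (l + 2 * ((4 * l + 2) - 4)).
Proof.
have Hn : 10 <= 4 * l + 2 by lia.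
have Hn4 : (4 * l + 2) %% 4 = 2 by lia.
have TTE : l + 2 * ((4 * l + 2) - 4) = (4 * l + 2) - 4 + M (4 * l + 2) by rewrite /M; lia.
split.
- apply/existsP; exists (@Ordinal (4 * l + 2) 0 (ltac:(by rewrite addn2))); apply/forallP => r.
  rewrite ffun_mk2 capture_mk2.
  apply: (upper (HP Hn Hn4)); first by rewrite /valid2 !cap1_valid.
  have F0 := @F1_0_le4 (4 * l + 2) _ Hn.
  rewrite TTE /Po.
  case: (cap1 _ (Some (r r0))) => [a|]; case: (cap1 _ (Some (r r1))) => [b|];
    rewrite /=; try (have := F0 a); try (have := F0 b); lia.
- move=> T' HT'. rewrite /capt_le negb_exists; apply/forallP => c0.
  rewrite negb_forall; apply/existsP.
  have [p [Hp Ap Fp]] := INIT Hn (ltn_ord c0).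
  exists [ffun _ => Ordinal Hp].
  rewrite ffun_mk2 capture_mk2 !ffunE.
  have Hpc : (Ordinal Hp : nat) != c0 by apply/negP => /eqP E; move: Ap; rewrite -E /adjn eqxx.
  rewrite cap1S (negbTE Hpc).
  have HQ' := @HQ (4 * l + 2) Hn Hn4.
  have V2 : valid2 c0 (Some (Ordinal Hp)) (Some (Ordinal Hp)) by rewrite valid_ss Hpc.
  refine (@lower _ (Hgraph (4 * l + 2)) (@Qo (4 * l + 2)) (fun _ => erefl) HQ' T' c0 _ _ V2 _).
  rewrite /Qo Q2_nn //= minnn. lia.
Qed.
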